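(* Let $(N,v)$ be a balanced game such that $\mathscr{F}:=\mathscr{VE}(N,v)$ is core-describing. If $(N,v)$ is $\mathscr{F}$-weakly extendable, then $(N,v)$ has a nonempty and stable core.
   Context: A game $(N,v)$: $N$ finite nonempty, $v:2^N\to\mathbb{R}$, $v(\varnothing)=0$; $x(S)=\sum_{i\in S}x_i$. Preimputations $X(N,v)=\{x\mid x(N)=v(N)\}$; imputations $I(N,v)=\{x\in X(N,v)\mid x_i\ge v(\{i\})\ \forall i\}$; core $C(N,v)=\{x\in X(N,v)\mid x(S)\ge v(S)\ \forall S\subseteq N\}$; balanced means nonempty core. For a coalition $S$, $C(S,v)=\{y\in\mathbb{R}^S\mid y(S)=v(S),\ y(T)\ge v(T)\ \forall T\subseteq S\}$. $x$ dominates $y$ via $S$ if $x(S)\le v(S)$ and $x_i>y_i$ for all $i\in S$. A set $U\subseteq I(N,v)$ is stable if no element of $U$ dominates another element of $U$ and every $y\in I(N,v)\setminus U$ is dominated by some $x\in U$. $S$ is strictly vital-exact if some $x\in C(N,v)$ has $x(S)=v(S)$ and $x(T)>v(T)$ for all $\varnothing\ne T\subsetneq S$; $\mathscr{VE}(N,v)$ is the set of these. $\mathscr{F}$ is core-describing if $C(N,v)=\{x\in X(N,v)\mid x(S)\ge v(S)\ \forall S\in\mathscr{F}\}$. For $\mathscr{S}\subseteq\mathscr{F}$, $\mathscr{S}$ is $\mathscr{F}$-feasible if $\{x\in X(N,v)\mid x(S)<v(S)\ \forall S\in\mathscr{S},\ x(T)\ge v(T)\ \forall T\in\mathscr{F}\setminus\mathscr{S}\}\neq\varnothing$.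 A coalition $S$ is extendable if for every $y\in C(S,v)$ there is $x\in C(N,v)$ with $x_i=y_i$ for all $i\in S$. The game is $\mathscr{F}$-weakly extendable if every nonempty $\mathscr{F}$-feasible collection contains an inclusion-minimal element (minimal within that collection) which is extendable. *)

(* Defs.v *)
From HB Require Import structures.
From mathcomp Require Import all_boot all_order all_algebra.
From mathcomp Require Import reals.
Set Implicit Arguments. Unset Strict Implicit. Unset Printing Implicit Defensive.
Import Order.TTheory GRing.Theory Num.Theory.
Local Open Scope ring_scope.

Section Games.
Variables (R : realType) (N : finType) (v : {set N} -> R).

Definition xsum (x : N -> R) (S : {set N}) : R := \sum_(i in S) x i.

Definition preimp (x : N -> R) : Prop := xsum x [set: N] = v [set: N].

Definition imput (x : N -> R) : Prop :=
  preimp x /\ forall i : N, v [set i] <= x i.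

Definition core (x : N -> R) : Prop :=
  preimp x /\ forall S : {set N}, v S <= xsum x S.

(* C(S,v): vectors y in R^S, represented by functions N -> R whose values
   outside S are irrelevant *)
Definition subcore (S : {set N}) (y : N -> R) : Prop :=
  xsum y S = v S /\ forall T : {set N}, T \subset S -> v T <= xsum y T.

Definition dominates_via (x y : N -> R) (S : {set N}) : Prop :=
  xsum x S <= v S /\ forall i, i \in S -> y i < x i.

Definition dominates (x y : N -> R) : Prop :=
  exists S : {set N}, S != set0 /\ dominates_via x y S.

Definition stable (U : (N -> R) -> Prop) : Prop :=
  (forall x, U x -> imput x) /\
  (forall x y, U x -> U y -> ~ dominates x y) /\
  (forall y, imput y -> ~ U y -> exists x, U x /\ dominates x y).

Definition strictly_vital_exact (S : {set N}) : Prop :=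
  exists x, core x /\ xsum x S = v S /\
    forall T : {set N}, T != set0 -> T \proper S -> v T < xsum x T.

Definition core_describing (F : {set N} -> Prop) : Prop :=
  forall x, core x <-> (preimp x /\ forall S, F S -> v S <= xsum x S).

Definition feasible (F Sc : {set N} -> Prop) : Prop :=
  exists x, preimp x /\ (forall S, Sc S -> xsum x S < v S) /\
    (forall T, F T -> ~ Sc T -> v T <= xsum x T).

Definition extendable (S : {set N}) : Prop :=
  forall y, subcore S y -> exists x, core x /\ forall i, i \in S -> x i = y i.

Definition weakly_extendable (F : {set N} -> Prop) : Prop :=
  forall Sc : {set N} -> Prop,
    (forall S, Sc S -> F S) -> (exists S, Sc S) -> feasible F Sc ->
    exists S, [/\ Sc S, (forall T, Sc T -> T \proper S -> False) & extendable S].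

End Games.

(* Main.v *)
Require Import Defs.
From HB Require Import structures.
From mathcomp Require Import all_boot all_order all_algebra.
From mathcomp Require Import reals lra.
From Stdlib Require Import Classical.
Import Order.TTheory GRing.Theory Num.Theory.
Local Open Scope ring_scope.

Section Helpers.
Variables (R : realType) (N : finType) (v : {set N} -> R).

Lemma xsum_eq (a b : N -> R) (T : {set N}) :
  (forall i, i \in T -> a i = b i) -> xsum a T = xsum b T.
Proof. by move=> H; apply: eq_bigr. Qed.

Lemma xsum_le (a b : N -> R) (T : {set N}) :
  (forall i, i \in T -> a i <= b i) -> xsum a T <= xsum b T.
Proof. by move=> H; apply: ler_sum. Qed.

Lemma xsum_comb (a b : N -> R) (s t : R) (T : {set N}) :
  xsum (fun i => s * a i + t * b i) T = s * xsum a T + t * xsum b T.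
Proof. by rewrite /xsum big_split /= -!mulr_sumr. Qed.

Lemma xsum_shift (a : N -> R) (c : R) (T : {set N}) :
  xsum (fun i => a i + c) T = xsum a T + #|T|%:R * c.
Proof. by rewrite /xsum big_split /= sumr_const mulr_natl. Qed.

Lemma xsum0 (a : N -> R) : xsum a set0 = 0.
Proof. by rewrite /xsum big_set0. Qed.

End Helpers.

Section Key.
Variables (R : realType) (N : finType) (v : {set N} -> R).

Lemma key (S : {set N}) (y x w : N -> R) :
  v set0 = 0 ->
  core v x -> xsum x S = v S ->
  (forall T, T != set0 -> T \proper S -> v T < xsum x T) ->
  extendable v S ->
  (forall T, strictly_vital_exact v T -> xsum y T < v T -> T \proper S -> False) ->
  xsum w S = v S -> (forall i, i \in S -> y i <= w i) ->
  subcore v S w.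
Proof.
move=> v0 [_ cx] xS xstr ext minS wS yw.
split => //.
case: (boolP [exists T : {set N}, (T \subset S) && (xsum w T < v T)]); last first.
  move/existsPn=> H T TS; move: (H T); rewrite TS /= -leNgt; exact.
case/existsP=> T0 PT0; exfalso.
have Bprop : forall T : {set N}, (T \subset S) && (xsum w T < v T) ->
    [/\ T != set0, T \proper S, v T < xsum x T & xsum w T < v T].
  move=> T /andP[TS wT].
  have Tn0 : T != set0.
    apply/eqP=> T0e; move: wT; rewrite T0e xsum0 v0 ltxx //.
  have TpS : T \proper S.
    rewrite properEneq TS andbT; apply/eqP=> TSe; move: wT; rewrite TSe wS ltxx //.
  by split=> //; apply: xstr.
pose t (T : {set N}) := (xsum x T - v T) / (xsum x T - xsum w T).
have tP : forall T : {set N}, (T \subset S) && (xsum w T < v T) ->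
    [/\ 0 < t T, t T < 1 & t T * (xsum x T - xsum w T) = xsum x T - v T].
  move=> T /Bprop[_ _ h1 h2].
  have hb : 0 < xsum x T - xsum w T by lra.
  have ha : 0 < xsum x T - v T by lra.
  have e : t T * (xsum x T - xsum w T) = xsum x T - v T.
    by rewrite /t divfK // gt_eqF.
  split=> //.
  - by rewrite /t divr_gt0.
  - by rewrite /t ltr_pdivrMr //; lra.
case: (@arg_minP _ _ _ T0 (fun T : {set N} => (T \subset S) && (xsum w T < v T)) t PT0) => T1 PT1 T1min.
have [t0p t01 t0e] := tP _ PT1.
set t0 := t T1 in T1min t0p t01 t0e *.
pose p i := (1 - t0) * x i + t0 * w i.
have pS : forall T : {set N}, xsum p T = (1 - t0) * xsum x T + t0 * xsum w T.
  by move=> T; rewrite /p xsum_comb.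
have psub : subcore v S p.
  split; first by rewrite pS xS wS; lra.
  move=> T TS; rewrite pS.
  have vx := cx T.
  case: (boolP (xsum w T < v T)) => wT.
    have PT : (T \subset S) && (xsum w T < v T) by rewrite TS wT.
    have [tTp tT1 tTe] := tP _ PT.
    have le := T1min T PT.
    have [_ _ h1 h2] := Bprop _ PT.
    have hb : 0 < xsum x T - xsum w T by lra.
    nra.
  rewrite -leNgt in wT.
  have h1 : 0 <= (1 - t0) * (xsum x T - v T) by apply: mulr_ge0; lra.
  have h2 : 0 <= t0 * (xsum w T - v T) by apply: mulr_ge0; lra.
  lra.
pose Q (T : {set N}) := [&& T \subset S, T != set0, T != S & xsum p T == v T].
have QT1 : Q T1.
  have [h0 h1 h2 h3] := Bprop _ PT1.
  rewrite /Q h0 /=; move: h1; rewrite properEneq => /andP[-> ->] /=.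
  apply/eqP; rewrite pS; lra.
case: (@arg_minnP _ T1 Q (fun T : {set N} => #|T|) QT1) => T' QT' T'min.
move: QT' => /and4P[T'S T'n0 T'nS /eqP pT'].
have T'pS : T' \proper S by rewrite properEneq T'nS T'S.
have wT' : xsum w T' < v T'.
  rewrite ltNge; apply/negP=> wT.
  have := xstr _ T'n0 T'pS; move: pT'; rewrite pS => e h.
  have [_ _ _ h2] := Bprop _ PT1.
  nra.
have yT' : xsum y T' < v T'.
  apply: le_lt_trans wT'; apply: xsum_le => i iT; apply: yw.
  exact: (subsetP T'S).
case: (ext p psub) => xh [cxh xhp].
apply: (minS T') => //.
exists xh; split=> //; split.
  by rewrite (@xsum_eq _ _ _ p) // => i iT; apply: xhp; apply: (subsetP T'S).
move=> U Un0 UpT.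
have US : U \subset S by apply: subset_trans T'S; apply: proper_sub.
rewrite (@xsum_eq _ _ _ p); last by move=> i iU; apply: xhp; apply: (subsetP US).
have le : v U <= xsum p U by case: psub => _ /(_ U US).
rewrite lt_neqAle le andbT; apply/negP=> /eqP e.
have QU : Q U.
  rewrite /Q US Un0 /= e eqxx andbT.
  apply/eqP=> USe; move: UpT; rewrite USe => SpT.
  have := proper_trans SpT T'pS; by rewrite properxx.
by have := leq_trans (proper_card UpT) (T'min U QU); rewrite ltnn.
Qed.

End Key.

Theorem proposition7p4 (R : realType) (N : finType) (v : {set N} -> R) :
  (0 < #|N|)%N ->
  v set0 = 0 ->
  (exists x, core v x) ->
  core_describing v (strictly_vital_exact v) ->
  weakly_extendable v (strictly_vital_exact v) ->
  (exists x, core v x) /\ stable v (core v).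
Proof.
move=> _ v0 hc cd we; split=> //; split; [|split].
- move=> x [px cx]; split=> // i; have := cx [set i]; by rewrite /xsum big_set1.
- move=> x y _ [_ cy] [S [Sn0 [xS yx]]].
  have lt : xsum y S < xsum x S.
    rewrite /xsum; apply: ltr_sum => //.
    case/set0Pn: Sn0 => i iS; apply/hasP; exists i => //; exact: mem_index_enum.
  have := cy S; lra.
- move=> y iy ny.
  have py : preimp v y by case: iy.
  have [S0 [FS0 yS0]] : exists S, strictly_vital_exact v S /\ xsum y S < v S.
    apply: NNPP => H; apply: ny; apply/cd; split=> // S FS.
    rewrite leNgt; apply/negP=> lt; apply: H; by exists S.
  have := we (fun T => strictly_vital_exact v T /\ xsum y T < v T).
  case.
  + by move=> T [].
  + by exists S0.
  + exists y; split=> //; split; first by move=> T [].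
    move=> T FT nT; rewrite leNgt; apply/negP=> lt; apply: nT; by split.
  move=> S [[FS yS] minS extS].
  have Sn0 : S != set0.
    by apply/eqP=> e; move: yS; rewrite e xsum0 v0 ltxx.
  have cS : (0 < #|S|%:R :> R) by rewrite ltr0n card_gt0.
  case: FS => x [cx [xS xstr]].
  pose d := v S - xsum y S.
  have dp : 0 < d by rewrite /d; lra.
  pose w i := y i + d / #|S|%:R.
  have wS : xsum w S = v S.
    rewrite /w xsum_shift mulrC divfK; last by rewrite gt_eqF.
    rewrite /d; lra.
  have dq : 0 < d / #|S|%:R by apply: divr_gt0.
  have yw : forall i, i \in S -> y i <= w i by move=> i _; rewrite /w; lra.
  have sw := @key R N v S y x w v0 cx xS xstr extS (fun T h1 h2 => minS T (conj h1 h2)) wS yw.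
  case: (extS w sw) => xh [cxh xhw].
  exists xh; split=> //; exists S; split=> //; split.
    by rewrite (@xsum_eq _ _ _ w) ?wS // => i iS; apply: xhw.
  by move=> i iS; rewrite xhw // /w; lra.
Qed.
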